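(* Let $(J,F,Y)$ be a pullback triple with $J:\mathcal X\to\mathcal H$, $F:\mathcal X\to\mathcal E$. Then the following are equivalent: (i) $F$ is a partial isometry; (ii) $\mathcal X=\mathcal N(J)\oplus\mathcal N(F)$ (orthogonal direct sum); (iii) $JF^*=0$; (iv) $J\,\mathcal N(F)$ is dense in $\mathcal H$.
   Context: For Hilbert spaces $\mathcal H,\mathcal X,\mathcal E$, a pullback triple $(J,F,Y)$ consists of $J:\mathcal X\to\mathcal H$, $F:\mathcal X\to\mathcal E$ bounded with dense range, $Y:\mathcal H\to\mathcal X$ a completion operator (densely defined injective linear map with dense range), with $\|u\|_{\mathcal X}^2=\|Ju\|^2+\|Fu\|_{\mathcal E}^2$ for all $u\in\mathcal X$ and $JYf=f$ for $f\in\mathcal D(Y)$. $\mathcal N(\cdot)$ denotes null space. *)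

(* Defs.v *)
From mathcomp Require Import all_boot all_order all_algebra.
From mathcomp Require Import reals complex.
Set Implicit Arguments. Unset Strict Implicit. Unset Printing Implicit Defensive.
Import Order.TTheory GRing.Theory Num.Theory.
Local Open Scope ring_scope.

Definition hnorm (R : realType) (V : lmodType R[i]) (ip : V -> V -> R[i])
  (x : V) : R := Num.sqrt (complex.Re (ip x x)).

Definition is_hilbert (R : realType) (V : lmodType R[i])
  (ip : V -> V -> R[i]) : Prop :=
  [/\ (forall (a : R[i]) (x y z : V), ip (a *: x + y) z = a * ip x z + ip y z),
      (forall x y : V, ip y x = conjc (ip x y)),
      (forall x : V, 0 <= ip x x),
      (forall x : V, ip x x = 0 -> x = 0)
    & (forall u : nat -> V,
         (forall eps : R, 0 < eps -> exists N : nat, forall m n : nat,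
              (N <= m)%N -> (N <= n)%N -> hnorm ip (u m - u n) < eps) ->
         exists l : V, forall eps : R, 0 < eps -> exists N : nat,
              forall n : nat, (N <= n)%N -> hnorm ip (u n - l) < eps)].

Definition is_dense (R : realType) (W : lmodType R[i]) (ipW : W -> W -> R[i])
  (S : W -> Prop) : Prop :=
  forall (w : W) (eps : R), 0 < eps -> exists2 s, S s & hnorm ipW (s - w) < eps.

Definition is_linear (R : realType) (V W : lmodType R[i]) (T : V -> W) : Prop :=
  forall (a : R[i]) (x y : V), T (a *: x + y) = a *: T x + T y.

Definition is_bounded (R : realType) (V W : lmodType R[i])
  (ipV : V -> V -> R[i]) (ipW : W -> W -> R[i]) (T : V -> W) : Prop :=
  exists M : R, forall x : V, hnorm ipW (T x) <= M * hnorm ipV x.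

Definition bounded_dense_range (R : realType) (V W : lmodType R[i])
  (ipV : V -> V -> R[i]) (ipW : W -> W -> R[i]) (T : V -> W) : Prop :=
  [/\ is_linear T, is_bounded ipV ipW T & is_dense ipW (fun w => exists x, T x = w)].

Definition completion_operator (R : realType) (V W : lmodType R[i])
  (ipV : V -> V -> R[i]) (ipW : W -> W -> R[i]) (D : V -> Prop) (Y : V -> W)
  : Prop :=
  [/\ D 0 /\ (forall (a : R[i]) (f g : V), D f -> D g -> D (a *: f + g)),
      is_dense ipV D,
      (forall (a : R[i]) (f g : V), D f -> D g -> Y (a *: f + g) = a *: Y f + Y g),
      (forall f g : V, D f -> D g -> Y f = Y g -> f = g)
    & is_dense ipW (fun x => exists2 f, D f & Y f = x)].

Definition pullback_triple (R : realType) (H X E : lmodType R[i])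
  (ipH : H -> H -> R[i]) (ipX : X -> X -> R[i]) (ipE : E -> E -> R[i])
  (J : X -> H) (F : X -> E) (D : H -> Prop) (Y : H -> X) : Prop :=
  [/\ bounded_dense_range ipX ipH J,
      bounded_dense_range ipX ipE F,
      completion_operator ipH ipX D Y,
      (forall u : X, hnorm ipX u ^+ 2 = hnorm ipH (J u) ^+ 2 + hnorm ipE (F u) ^+ 2)
    & (forall f : H, D f -> J (Y f) = f)].

Definition is_adjoint (R : realType) (V W : lmodType R[i])
  (ipV : V -> V -> R[i]) (ipW : W -> W -> R[i]) (T : V -> W) (G : W -> V)
  : Prop :=
  forall (x : V) (w : W), ipW (T x) w = ipV x (G w).

Definition partial_isometry (R : realType) (V W : lmodType R[i])
  (ipV : V -> V -> R[i]) (ipW : W -> W -> R[i]) (T : V -> W) : Prop :=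
  forall x : V, (forall y : V, T y = 0 -> ipV x y = 0) ->
    hnorm ipW (T x) = hnorm ipV x.

Definition orth_direct_sum_kernels (R : realType) (X H E : lmodType R[i])
  (ipX : X -> X -> R[i]) (J : X -> H) (F : X -> E) : Prop :=
  (forall a b : X, J a = 0 -> F b = 0 -> ipX a b = 0) /\
  (forall x : X, exists a b : X, [/\ J a = 0, F b = 0 & x = a + b]).

(* Main.v *)
Require Import Defs.
From mathcomp Require Import all_boot all_order all_algebra.
From mathcomp Require Import classical_sets reals complex.
From mathcomp Require Import ring lra.
From Stdlib Require Import Classical ClassicalEpsilon.
Set Implicit Arguments. Unset Strict Implicit. Unset Printing Implicit Defensive.
Import Order.TTheory GRing.Theory Num.Theory.
Local Open Scope ring_scope.
Local Open Scope complex_scope.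

Section H.
Variables (R : realType) (V : lmodType R[i]) (ip : V -> V -> R[i]).
Hypothesis hV : is_hilbert ip.

Lemma ipDl x y z : ip (x + y) z = ip x z + ip y z.
Proof. case: hV => h _ _ _ _; by have := h 1 x y z; rewrite scale1r mul1r. Qed.
Lemma ip0l z : ip 0 z = 0.
Proof. by have := ipDl 0 0 z; rewrite addr0 => /eqP; rewrite -subr_eq subrr eq_sym => /eqP. Qed.
Lemma ipZl a x z : ip (a *: x) z = a * ip x z.
Proof. case: hV => h _ _ _ _; by have := h a x 0 z; rewrite !addr0 ip0l addr0. Qed.
Lemma ipC x y : ip y x = conjc (ip x y).
Proof. by case: hV => _ h _ _ _. Qed.
Lemma ipDr x y z : ip z (x + y) = ip z x + ip z y.
Proof. by rewrite ipC ipDl rmorphD (ipC x z) (ipC y z). Qed.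
Lemma ipZr a x z : ip z (a *: x) = conjc a * ip z x.
Proof. by rewrite ipC ipZl rmorphM (ipC x z). Qed.
Lemma ip0r z : ip z 0 = 0.
Proof. by rewrite ipC ip0l conjc0. Qed.
Lemma ipNl x z : ip (- x) z = - ip x z.
Proof. by rewrite -scaleN1r ipZl mulN1r. Qed.
Lemma ipNr x z : ip z (- x) = - ip z x.
Proof. by rewrite -scaleN1r ipZr rmorphN1 mulN1r. Qed.
Lemma ipBl x y z : ip (x - y) z = ip x z - ip y z.
Proof. by rewrite ipDl ipNl. Qed.
Lemma ipBr x y z : ip z (x - y) = ip z x - ip z y.
Proof. by rewrite ipDr ipNr. Qed.

Definition q x : R := complex.Re (ip x x).
Lemma q_ge0 x : 0 <= q x.
Proof. case: hV => _ _ h _ _; have := h x. rewrite lecE => /andP[_]. done. Qed.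
Lemma ipxx x : ip x x = (q x)%:C.
Proof. case: hV => _ _ h _ _; have := ger0_Im (h x); rewrite /q; case: (ip x x) => a b /= ->. done. Qed.
Lemma q_eq0 x : q x = 0 -> x = 0.
Proof. case: hV => _ _ _ h _ => H; apply: h; by rewrite ipxx H. Qed.
Lemma hnorm2 x : hnorm ip x ^+ 2 = q x.
Proof. by rewrite /hnorm sqr_sqrtr // q_ge0. Qed.
Lemma hnorm_ge0 x : 0 <= hnorm ip x.
Proof. exact: sqrtr_ge0. Qed.


Definition nc (c : R[i]) : R := complex.Re c ^+ 2 + complex.Im c ^+ 2.
Lemma nc_ge0 c : 0 <= nc c.
Proof. by rewrite /nc addr_ge0 // sqr_ge0. Qed.
Lemma mulcJ c : c * conjc c = (nc c)%:C.
Proof. case: c => a b; rewrite /nc /=; simpc. apply/eqP; rewrite eq_complex /=. apply/andP; split; apply/eqP; ring. Qed.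
Lemma nc_eq0 c : nc c = 0 -> c = 0.
Proof. case: c => a b; rewrite /nc /= => H.
have ha : a = 0 by apply/eqP; rewrite -sqrf_eq0 eq_le sqr_ge0 andbT -H lerDl sqr_ge0.
have hb : b = 0 by apply/eqP; rewrite -sqrf_eq0 eq_le sqr_ge0 andbT -H lerDr sqr_ge0.
by rewrite ha hb. Qed.

Lemma ip_expand z k t : ip (z - t *: k) (z - t *: k) =
  ip z z - conjc t * ip z k - t * ip k z + t * conjc t * ip k k.
Proof. rewrite ipBl !ipBr !ipZl !ipZr. ring. Qed.

Lemma q_sub_proj z k : q k != 0 ->
  q (z - (ip z k / (q k)%:C) *: k) = q z - nc (ip z k) / q k.
Proof.
move=> nz; apply: complexI; have := ip_expand z k (ip z k / (q k)%:C); rewrite ipxx => ->. rewrite (ipC z k) !ipxx.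
set c := ip z k; set p := q k.
have hp : (p%:C : R[i]) != 0.
  by apply: contra nz => /eqP H; apply/eqP; exact: (complexI (H : p%:C = 0%:C)).
have hc : conjc (c / p%:C) = conjc c / p%:C.   rewrite rmorphM -fmorphV; congr (_ * _); apply/eqP; rewrite eq_complex /= oppr0 !eqxx //.
have e : (q z - nc c / p)%:C = (q z)%:C - (nc c)%:C / p%:C :> R[i] by rewrite rmorphB rmorphM fmorphV.
rewrite hc e -mulcJ.
field. done.
Qed.

Lemma CS z k : nc (ip z k) <= q z * q k.
Proof.
have [k0|nz] := eqVneq (q k) 0.
  rewrite k0 mulr0 (q_eq0 k0) ip0r /nc /=. rewrite expr0n /= addr0 //.
have := q_ge0 (z - (ip z k / (q k)%:C) *: k); rewrite q_sub_proj //.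
have qk : 0 < q k by rewrite lt_def nz q_ge0.
rewrite subr_ge0 ler_pdivrMr //.
Qed.

Lemma q_add a b : q (a + b) = q a + q b + 2 * complex.Re (ip a b).
Proof.
apply: complexI. rewrite -ipxx ipDl !ipDr (ipC a b) !ipxx.
case: (ip a b) => x y /=. apply/eqP; rewrite eq_complex /=; apply/andP; split; apply/eqP; ring.
Qed.

Lemma q_N a : q (- a) = q a.
Proof. by apply: complexI; rewrite -!ipxx ipNl ipNr opprK. Qed.

Lemma hnorm_triangle a b : hnorm ip (a + b) <= hnorm ip a + hnorm ip b.
Proof.
have ha := hnorm_ge0 a; have hb := hnorm_ge0 b.
have hab := hnorm_ge0 (a + b).
have e1 := hnorm2 a; have e2 := hnorm2 b; have e3 := hnorm2 (a + b).
have hcs := CS a b.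
have hre : complex.Re (ip a b) ^+ 2 <= nc (ip a b) by rewrite /nc lerDl sqr_ge0.
have qa := q_add a b.
set r := complex.Re (ip a b) in hre qa.
have hr : r <= hnorm ip a * hnorm ip b.
  have h2 : r ^+ 2 <= (hnorm ip a * hnorm ip b) ^+ 2 by rewrite exprMn e1 e2; apply: le_trans hcs.
  have hp : 0 <= hnorm ip a * hnorm ip b by apply: mulr_ge0.
  nra.
have : hnorm ip (a + b) ^+ 2 <= (hnorm ip a + hnorm ip b) ^+ 2.
  rewrite e3 qa sqrrD e1 e2. lra.
move=> h; nra.
Qed.

Lemma q_lt_hnorm v eps : 0 < eps -> (hnorm ip v < eps) = (q v < eps ^+ 2).
Proof. move=> he; rewrite -hnorm2 ltr_pXn2r // nnegrE ?hnorm_ge0 // ltW //. Qed.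

Lemma inv_mono (N n : nat) : (N <= n)%N -> n.+1%:R^-1 <= N.+1%:R^-1 :> R.
Proof. by move=> h; rewrite lef_pV2 ?posrE ?ltr0Sn // ler_nat ltnS. Qed.

Lemma q_sub a b : q (a - b) = q a + q b - 2 * complex.Re (ip a b).
Proof. rewrite q_add q_N ipNr; case: (ip a b) => u w /=. ring. Qed.

Lemma parallel a b : q (a + b) + q (a - b) = 2 * q a + 2 * q b.
Proof. rewrite q_add q_sub; ring. Qed.

Lemma q_double w : q (w + w) = 4 * q w.
Proof. rewrite q_add /q; ring. Qed.

Variable K : V -> Prop.
Hypotheses (K0 : K 0) (Klin : forall a x y, K x -> K y -> K (a *: x + y))
  (Kcl : forall l, (forall eps, 0 < eps -> exists2 x, K x & hnorm ip (x - l) < eps) -> K l).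

Lemma KZ a x : K x -> K (a *: x). Proof. by move=> h; rewrite -[_ *: _]addr0; apply: Klin. Qed.
Lemma KD x y : K x -> K y -> K (x + y). Proof. by move=> h1 h2; rewrite -[x]scale1r; apply: Klin. Qed.

Lemma projection x : exists k z, [/\ K k, (forall y, K y -> ip z y = 0) & x = k + z].
Proof.
pose E := fun r : R => exists2 y, K y & r = q (x - y).
have hE : has_inf E.
  split; first by exists (q (x - 0)); exists 0.
  by exists 0 => r [y _ ->]; apply: q_ge0.
pose d := inf E.
have dle : forall y, K y -> d <= q (x - y).
  by move=> y Ky; apply: ge_inf; [case: hE | exists y].
have d0 : 0 <= d by apply: lb_le_inf; [case: hE | move=> r [y _ ->]; apply: q_ge0].
have H : forall n : nat, { y | K y /\ q (x - y) < d + n.+1%:R^-1 }.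
  move=> n; apply: constructive_indefinite_description.
  have hpos : 0 < n.+1%:R^-1 :> R by rewrite invr_gt0 ltr0Sn.
  have [r [y Ky ->] hr] := inf_adherent hpos hE.
  by exists y.
pose ys n := proj1_sig (H n).
have Kys n : K (ys n) by case: (proj2_sig (H n)).
have qys n : q (x - ys n) < d + n.+1%:R^-1 by case: (proj2_sig (H n)).
have cauchy_b : forall m n, q (ys m - ys n) <= 2 * m.+1%:R^-1 + 2 * n.+1%:R^-1.
  move=> m n.
  pose mid := (2^-1 : R[i]) *: (ys n + ys m).
  have Kmid : K mid by apply: KZ; apply: KD.
  have hm : mid + mid = ys n + ys m.
    rewrite /mid -scalerDl -[X in _ = X]scale1r; congr (_ *: _).
    by field.
  have e1 : (x - ys n) + (x - ys m) = (x - mid) + (x - mid).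
    by rewrite addrACA -opprD [RHS]addrACA -opprD hm.
  have e2 : (x - ys n) - (x - ys m) = ys m - ys n.
    by rewrite opprB addrC addrA subrK.
  have := parallel (x - ys n) (x - ys m); rewrite e1 e2 q_double.
  have := dle _ Kmid; have := qys n; have := qys m.
  move: (m.+1%:R^-1 : R) => im; move: (n.+1%:R^-1 : R) => in_; lra.
have cauchy : forall eps : R, 0 < eps -> exists N : nat, forall m n : nat,
    (N <= m)%N -> (N <= n)%N -> hnorm ip (ys m - ys n) < eps.
  move=> eps he.
  have he2 : 0 < eps ^+ 2 / 4 by rewrite divr_gt0 // exprn_gt0.
  have [N hN] := ltr_add_invr he2; rewrite add0r in hN.
  exists N => m n hm hn; rewrite q_lt_hnorm //.
  apply: (le_lt_trans (cauchy_b m n)).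
  have := inv_mono hm; have := inv_mono hn.
  move: hN; move: (m.+1%:R^-1 : R) (n.+1%:R^-1 : R) (N.+1%:R^-1 : R) => a b c.
  lra.
case: hV => _ _ _ _ /(_ ys cauchy) [l hl].
have Kl : K l.
  apply: Kcl => eps he; have [N hN] := hl eps he.
  by exists (ys N) => //; apply: hN.
have qle : q (x - l) <= d.
  apply/ler_addgt0Pr => e he.
  pose dl := e / (2 * d + 6 + e).
  have hden : 0 < 2 * d + 6 + e by lra.
  have dl0 : 0 < dl by rewrite divr_gt0.
  have dl1 : dl < 1 by rewrite ltr_pdivrMr // mul1r; lra.
  have dl2 : dl * (2 * d + 6) <= e.
    have : dl * (2 * d + 6 + e) = e by rewrite /dl mulfVK // gt_eqF.
    have : 0 <= dl * e by rewrite mulr_ge0 // ltW.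
    nra.
  have [N1 hN1] := hl dl dl0.
  have [N2 hN2] := ltr_add_invr dl0; rewrite add0r in hN2.
  pose n := maxn N1 N2.
  have ht : hnorm ip (ys n - l) < dl by apply: hN1; rewrite leq_maxl.
  have hs : q (x - ys n) < d + dl.
    apply: (lt_le_trans (qys n)); rewrite lerD2l.
    apply: le_trans (ltW hN2); by apply: inv_mono; rewrite leq_maxr.
  have tri := hnorm_triangle (x - ys n) (ys n - l).
  rewrite addrA subrK in tri.
  have := hnorm2 (x - l); have := hnorm2 (x - ys n).
  have := hnorm_ge0 (x - l); have := hnorm_ge0 (x - ys n); have := hnorm_ge0 (ys n - l).
  move: tri ht hs.
  move: (hnorm ip (x - l)) (hnorm ip (x - ys n)) (hnorm ip (ys n - l)) => a b c.
  move=> tri ht hs c0 b0 a0 eb ea.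
  have h1 : a ^+ 2 <= (b + c) ^+ 2 by nra.
  have h2 : b <= d + 2 by nra.
  rewrite -ea; nra.
exists l, (x - l); split => //; last by rewrite addrC subrK.
move=> y Ky.
have [y0|nz] := eqVneq (q y) 0.
  by rewrite (q_eq0 y0) ip0r.
set z := x - l.
have qy : 0 < q y by rewrite lt_def nz q_ge0.
pose t := ip z y / (q y)%:C.
have Kt : K (l + t *: y) by apply: KD => //; apply: KZ.
have := dle _ Kt.
have -> : x - (l + t *: y) = z - t *: y by rewrite opprD addrA.
rewrite q_sub_proj //.
have hn := nc_ge0 (ip z y).
have : 0 <= nc (ip z y) / q y by rewrite divr_ge0 // ltW.
move=> h1 h2.
have h3 : nc (ip z y) / q y = 0 by lra.
apply: nc_eq0; move/eqP: h3; rewrite mulf_eq0 invr_eq0 (negPf nz) orbF => /eqP //.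
Qed.
End H.
Section Lin.
Variables (R : realType) (V W : lmodType R[i]) (T : V -> W).
Hypothesis hT : is_linear T.
Lemma TD x y : T (x + y) = T x + T y.
Proof. by have := hT 1 x y; rewrite !scale1r. Qed.
Lemma T0 : T 0 = 0.
Proof. by have := TD 0 0; rewrite addr0 => /eqP; rewrite -subr_eq subrr eq_sym => /eqP. Qed.
Lemma TZ a x : T (a *: x) = a *: T x.
Proof. by have := hT a x 0; rewrite !addr0 T0 addr0. Qed.
Lemma TN x : T (- x) = - T x.
Proof. by rewrite -scaleN1r TZ scaleN1r. Qed.
Lemma TB x y : T (x - y) = T x - T y.
Proof. by rewrite TD TN. Qed.
End Lin.

Lemma approx_zero (R : realType) (r c : R) : 0 <= c ->
  (forall eps, 0 < eps -> r <= c * eps ^+ 2) -> r <= 0.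
Proof.
move=> c0 h; apply/ler_addgt0Pr => e he; rewrite add0r.
have hc : 0 < c + 1 by lra.
pose t := e / (c + 1).
have t0 : 0 < t by rewrite divr_gt0.
have st : 0 < Num.sqrt t by rewrite sqrtr_gt0.
have h1 : r <= c * t by have := h _ st; rewrite sqr_sqrtr // ltW.
have : t * (c + 1) = e by rewrite /t mulfVK // gt_eqF.
nra.
Qed.

Lemma kernel_closed (R : realType) (V W : lmodType R[i]) (ipV : V -> V -> R[i])
  (ipW : W -> W -> R[i]) (hW : is_hilbert ipW) (T : V -> W)
  (hT : is_linear T) (hb : is_bounded ipV ipW T) (l : V) :
  (forall eps, 0 < eps -> exists2 x, T x = 0 & hnorm ipV (x - l) < eps) -> T l = 0.
Proof.
case: hb => M hM H.
apply: (q_eq0 hW); apply/eqP; rewrite eq_le q_ge0 // andbT.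
apply: (approx_zero (c := M ^+ 2)); first exact: sqr_ge0.
move=> eps he; have [x Tx hx] := H eps he.
have e1 : T l = - T (x - l) by rewrite (TB hT) Tx sub0r opprK.
have := hM (x - l); rewrite -(hnorm2 hW) e1.
have -> : hnorm ipW (- T (x - l)) = hnorm ipW (T (x - l)) by rewrite /hnorm -/(q ipW _) -/(q ipW _) (q_N hW).
have := hnorm_ge0 ipW (T (x - l)); have := hnorm_ge0 ipV (x - l).
move: hx; move: (hnorm ipW (T (x - l))) (hnorm ipV (x - l)) => a b hx b0 a0 hab.
have h1 : a ^+ 2 <= (M * b) ^+ 2 by nra.
have h2 : b ^+ 2 <= eps ^+ 2 by nra.
have h3 : M ^+ 2 * b ^+ 2 <= M ^+ 2 * eps ^+ 2 by rewrite ler_wpM2l // sqr_ge0.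
rewrite exprMn in h1; lra.
Qed.

Lemma riesz (R : realType) (V : lmodType R[i]) (ip : V -> V -> R[i]) (hV : is_hilbert ip)
  (phi : V -> R[i]) (hphi : forall a x y, phi (a *: x + y) = a * phi x + phi y)
  (hcl : forall l, (forall eps, 0 < eps -> exists2 x, phi x = 0 & hnorm ip (x - l) < eps) -> phi l = 0) :
  exists w, forall x, phi x = ip x w.
Proof.
have phiD x y : phi (x + y) = phi x + phi y by have := hphi 1 x y; rewrite scale1r mul1r.
have phi0 : phi 0 = 0.
  by have := phiD 0 0; rewrite addr0 => /eqP; rewrite -subr_eq subrr eq_sym => /eqP.
have phiZ a x : phi (a *: x) = a * phi x by have := hphi a x 0; rewrite !addr0 phi0 addr0.
have phiB x y : phi (x - y) = phi x - phi y.
  by rewrite phiD -scaleN1r phiZ mulN1r.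
case: (classic (exists x0, phi x0 <> 0)); last first.
  move=> nex; exists 0 => x; rewrite (ip0r hV).
  by apply: NNPP => h; apply: nex; exists x.
move=> [x0 hx0].
have K0 : phi 0 = 0 := phi0.
have Klin : forall a x y, phi x = 0 -> phi y = 0 -> phi (a *: x + y) = 0.
  by move=> a x y h1 h2; rewrite hphi h1 h2 mulr0 addr0.
have [k [z [Kk Hz ex0]]] := @projection _ _ _ hV (fun x => phi x = 0) K0 Klin hcl x0.
have pz : phi z != 0.
  by apply/eqP; move: hx0; rewrite ex0 phiD Kk add0r.
have qz : q ip z != 0.
  apply/eqP => /(q_eq0 hV) z0; by move: pz; rewrite z0 phi0 eqxx.
have qzC : ((q ip z)%:C : R[i]) != 0.
  by apply: contra qz => /eqP H; apply/eqP; exact: (complexI (H : _%:C = 0%:C)).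
exists (conjc (phi z / (q ip z)%:C) *: z) => x.
rewrite (ipZr hV) conjcK.
pose c := phi x / phi z.
have : phi (x - c *: z) = 0 by rewrite phiB phiZ /c mulfVK // subrr.
move/Hz => h0; have : ip (x - c *: z) z = 0 by rewrite (ipC hV) h0 conjc0.
rewrite (ipBl hV) (ipZl hV) (ipxx hV) => /eqP; rewrite subr_eq0 => /eqP ->.
rewrite /c; field.
by apply/andP; split.
Qed.

Lemma polar (R : realType) (V : lmodType R[i]) (ip : V -> V -> R[i]) (hV : is_hilbert ip) u v :
  2 * ip u v = ip (u + v) (u + v) - ip u u - ip v v +
     'i * (ip (u + 'i *: v) (u + 'i *: v) - ip u u - ip v v).
Proof.
have ci : conjc ('i : R[i]) = - 'i by apply/eqP; rewrite eq_complex /= oppr0 !eqxx.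
have hI : ('i : R[i]) * 'i = -1 by rewrite -expr2 sqr_i.
rewrite !(ipDl hV) !(ipDr hV) !(ipZl hV) !(ipZr hV) ci.
transitivity (2 * ip u v + (1 + 'i * 'i) * (ip v u - ip u v - 'i * ip v v)).
  by rewrite hI addrN mul0r addr0.
ring.
Qed.

Lemma nc_real (R : realType) (r : R) : nc (r%:C) = r ^+ 2.
Proof. by rewrite /nc /= expr0n addr0. Qed.
Lemma nc_N (R : realType) (c : R[i]) : nc (- c) = nc c.
Proof. by case: c => a b; rewrite /nc /= !sqrrN. Qed.
Lemma sq_eq (R : realType) (a b : R) : 0 <= a -> 0 <= b -> a ^+ 2 = b ^+ 2 -> a = b.
Proof. move=> ha hb e; apply/eqP; rewrite eq_le; apply/andP; split; nra. Qed.

Unset Implicit Arguments.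
Local Close Scope complex_scope.

Theorem mainTheorem6 (R : realType) (H X E : lmodType R[i])
  (ipH : H -> H -> R[i]) (ipX : X -> X -> R[i]) (ipE : E -> E -> R[i])
  (hH : is_hilbert ipH) (hX : is_hilbert ipX) (hE : is_hilbert ipE)
  (J : X -> H) (F : X -> E) (D : H -> Prop) (Y : H -> X)
  (hPB : pullback_triple ipH ipX ipE J F D Y) :
  let i := partial_isometry ipX ipE F in
  let ii := orth_direct_sum_kernels ipX J F in
  let iii := forall Fs : E -> X, is_adjoint ipX ipE F Fs -> forall e : E, J (Fs e) = 0 in
  let iv := is_dense ipH (fun h => exists2 x, F x = 0 & J x = h) in
  [/\ i <-> ii, i <-> iii & i <-> iv].
Proof.
move=> i ii iii iv.
case: hPB => [[Jlin Jbd Jden] [Flin Fbd Fden] _ hid _].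
have QX u : q ipX u = q ipH (J u) + q ipE (F u).
  by rewrite -(hnorm2 hX) -(hnorm2 hH) -(hnorm2 hE); exact: hid.
have QXc u : ipX u u = ipH (J u) (J u) + ipE (F u) (F u).
  by rewrite (ipxx hX) (ipxx hH) (ipxx hE) QX rmorphD.
have pol u v : ipX u v = ipH (J u) (J v) + ipE (F u) (F v).
  apply: (@mulfI _ (2 : R[i])); first by rewrite pnatr_eq0.
  rewrite mulrDr (polar hX) (polar hH (J u)) (polar hE (F u)) !QXc.
  rewrite !(TD Jlin) !(TD Flin) !(TZ Jlin) !(TZ Flin); ring.
have orth a b : J a = 0 -> F b = 0 -> ipX a b = 0.
  by move=> ha hb; rewrite pol ha hb (ip0l hH) (ip0r hE) addr0.
have J0iso x : J x = 0 -> hnorm ipE (F x) = hnorm ipX x.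
  move=> hx; apply: sq_eq; rewrite ?hnorm_ge0 //.
  rewrite (hnorm2 hE) (hnorm2 hX) QX hx /q (ip0l hH) add0r //.
have isoJ0 x : hnorm ipE (F x) = hnorm ipX x -> J x = 0.
  move=> h; apply: (q_eq0 hH); have := QX x.
  rewrite -(hnorm2 hE) h (hnorm2 hX); lra.
have KlinF : forall a x y, F x = 0 -> F y = 0 -> F (a *: x + y) = 0.
  by move=> a x y h1 h2; rewrite Flin h1 h2 scaler0 addr0.
have KlinJ : forall a x y, J x = 0 -> J y = 0 -> J (a *: x + y) = 0.
  by move=> a x y h1 h2; rewrite Jlin h1 h2 scaler0 addr0.
have KF := kernel_closed hE Flin Fbd.
have KJ := kernel_closed hH Jlin Jbd.
have hdef : forall (V : lmodType R[i]) (ip : V -> V -> R[i]), is_hilbert ip ->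
    forall x, ip x x = 0 -> x = 0 by move=> V ip [].
have i_ii : i <-> ii.
  split.
    move=> hi; split; first exact: orth.
    move=> x.
    have [k [z [Kk Hz ->]]] := @projection _ _ _ hX (fun y => F y = 0) (T0 Flin) KlinF KF x.
    exists z, k; split => //; last by rewrite addrC.
    by apply: isoJ0; apply: hi.
  move=> [_ hdec] x Hx.
  have [a [b [ha hb ex]]] := hdec x.
  have : ipX b b = 0.
    have h1 := Hx b hb; rewrite ex (ipDl hX) (orth a b ha hb) add0r in h1; exact h1.
  move/(hdef _ _ hX) => b0.
  by apply: J0iso; rewrite ex b0 addr0.
have iii_ii : iii -> ii.
  move=> h3.
  case: Fbd => M hM.
  have ex e : exists w, forall x, ipE (F x) e = ipX x w.
    apply: (riesz hX (phi := fun x => ipE (F x) e)).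
      by move=> a x y /=; rewrite Flin (ipDl hE) (ipZl hE).
    move=> l Hl; apply: nc_eq0; apply/eqP; rewrite eq_le nc_ge0 andbT.
    apply: (approx_zero (c := M ^+ 2 * q ipE e)).
      by rewrite mulr_ge0 ?sqr_ge0 ?q_ge0.
    move=> eps he; have [x hx hxl] := Hl eps he.
    have e1 : ipE (F l) e = - ipE (F (x - l)) e.
      by rewrite (TB Flin) (ipBl hE) hx sub0r opprK.
    rewrite e1 nc_N.
    apply: (le_trans (CS hE _ _)).
    rewrite -(hnorm2 hE).
    have := hM (x - l); have := hnorm_ge0 ipE (F (x - l)); have := hnorm_ge0 ipX (x - l).
    have := q_ge0 hE e.
    move: hxl; move: (hnorm ipE (F (x - l))) (hnorm ipX (x - l)) (q ipE e) => a b c.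
    move=> hb c0 b0 a0 hab.
    have h1 : a ^+ 2 <= (M * b) ^+ 2 by nra.
    have h2 : b ^+ 2 <= eps ^+ 2 by nra.
    have h3' : M ^+ 2 * b ^+ 2 <= M ^+ 2 * eps ^+ 2 by rewrite ler_wpM2l // sqr_ge0.
    rewrite exprMn in h1.
    have h4 : a ^+ 2 <= M ^+ 2 * eps ^+ 2 by lra.
    have := ler_wpM2r c0 h4; lra.
  pose Fs := fun e => proj1_sig (constructive_indefinite_description _ (ex e)).
  have hFs : is_adjoint ipX ipE F Fs.
    by move=> x e; exact: (proj2_sig (constructive_indefinite_description _ (ex e)) x).
  split; first exact: orth.
  move=> x.
  have [k [z [Kk Hz ->]]] := @projection _ _ _ hX (fun y => J y = 0) (T0 Jlin) KlinJ KJ x.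
  exists k, z; split => //.
  apply: (hdef _ _ hE); rewrite hFs; apply: Hz; exact: h3.
split => //.
  split.
    move=> hi Fs hFs e; apply: isoJ0; apply: hi => y hy.
    by rewrite (ipC hX y (Fs e)) -hFs hy (ip0l hE) conjc0.
  by move=> h3; apply/i_ii; apply: iii_ii.
split.
  move=> /i_ii [_ hdec] w eps he.
  have [s [x hx] hs] := Jden w eps he.
  have [a [b [ha hb ex]]] := hdec x.
  exists (J b); first by exists b.
  by rewrite -hx ex (TD Jlin) ha add0r in hs.
move=> h4 x Hx; apply: J0iso.
set w := J x.
have orthw b : F b = 0 -> ipH w (J b) = 0.
  by move=> hb; have := Hx b hb; rewrite pol hb (ip0r hE) addr0.
apply: (q_eq0 hH); apply/eqP; apply: contraT => nz.
have qw : 0 < q ipH w by rewrite lt_def nz q_ge0.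
have hw : 0 < hnorm ipH w by rewrite /hnorm -/(q ipH w) sqrtr_gt0.
have [s [b hb <-] hs] := h4 w _ hw.
rewrite (q_lt_hnorm hH _ hw) (hnorm2 hH) in hs.
have e1 : ipH w w = ipH w (w - J b) by rewrite (ipBr hH) orthw // subr0.
have := CS hH w (w - J b); rewrite -e1 (ipxx hH) nc_real.
have -> : w - J b = - (J b - w) by rewrite opprB.
rewrite (q_N hH).
move: hs qw; move: (q ipH w) (q ipH (J b - w)) => a c; nra.
Qed.
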